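(* Let $R$ be a ring and $M$ a projective left $R$-module which is 2-primal. Then $\mathcal N_s(M)=\langle E_M(0)\rangle=\beta_{co}(M)=\beta(M)$. In particular the zero submodule of $M$ satisfies both the complete radical formula and the radical formula.
   Context: Rings are associative with identity; modules are unital left modules. A submodule $P$ of $M$ is prime if $RM\not\subseteq P$ and for every ideal $A$ of $R$ and submodule $K$ with $AK\subseteq P$, $K\subseteq P$ or $AM\subseteq P$; completely prime if $RM\not\subseteq P$ and $rm\in P$ implies $m\in P$ or $rM\subseteq P$. $\beta(M)$ (resp. $\beta_{co}(M)$) is the intersection of all prime (resp. completely prime) submodules ($=M$ if none). $M$ is 2-primal if $\beta(M)=\beta_{co}(M)$. $E_M(0)=\{rm: r\in R,m\in M, r^km=0\text{ for some }k\in\mathbb N\}$, $\langle E_M(0)\rangle$ the submodule generated. A submodule $N$ satisfies the radical formula (resp. complete radical formula) if $\langle E_M(N)\rangle$ equals the intersection of all prime (resp. completely prime) submodules containing $N$. $\mathcal N_s(M)$ is the set of strongly nilpotent elements: $m=\sum_{i=1}^r a_im_i$ ($a_i\in R,m_i\in M$) such that for each $i$ and every sequence $a_{i1}=a_i$, $a_{i,n+1}\in a_{in}Ra_{in}$, there is $k$ with $a_{ik}Rm_i=0$. *)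

(* Defs.v *)
From mathcomp Require Import all_boot all_algebra.
Set Implicit Arguments. Unset Strict Implicit. Unset Printing Implicit Defensive.
Import GRing.Theory.
Local Open Scope ring_scope.

Section ModuleDefs.
Variables (R : pzRingType) (M : lmodType R).

Definition rlinear (N N' : lmodType R) (f : N -> N') : Prop :=
  forall (a : R) (x y : N), f (a *: x + y) = a *: f x + f y.

Definition is_submodule (P : M -> Prop) : Prop :=
  [/\ P 0, (forall x y, P x -> P y -> P (x + y)) &
      (forall (a : R) x, P x -> P (a *: x))].

Definition is_ideal (A : R -> Prop) : Prop :=
  [/\ A 0, (forall x y, A x -> A y -> A (x + y)),
      (forall r a, A a -> A (r * a)) & (forall r a, A a -> A (a * r))].

Definition subset_M (A B : M -> Prop) : Prop := forall x, A x -> B x.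

Definition gen_sub (S : M -> Prop) : M -> Prop :=
  fun x => forall P, is_submodule P -> subset_M S P -> P x.

Definition prod_IS (A : R -> Prop) (K : M -> Prop) : M -> Prop :=
  gen_sub (fun x => exists a k, [/\ A a, K k & x = a *: k]).

Definition allR : R -> Prop := fun _ => True.
Definition allM : M -> Prop := fun _ => True.

Definition prime_sub (P : M -> Prop) : Prop :=
  [/\ is_submodule P, ~ subset_M (prod_IS allR allM) P &
      forall (A : R -> Prop) (K : M -> Prop), is_ideal A -> is_submodule K ->
        subset_M (prod_IS A K) P -> subset_M K P \/ subset_M (prod_IS A allM) P].

Definition cprime_sub (P : M -> Prop) : Prop :=
  [/\ is_submodule P, ~ subset_M (prod_IS allR allM) P &
      forall (r : R) (m : M), P (r *: m) -> P m \/ (forall m', P (r *: m'))].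

(* beta(M), beta_co(M): intersections (= M if there are none) *)
Definition beta : M -> Prop := fun x => forall P, prime_sub P -> P x.
Definition beta_co : M -> Prop := fun x => forall P, cprime_sub P -> P x.

Definition two_primal : Prop := forall x, beta x <-> beta_co x.

Definition E_M (N : M -> Prop) : M -> Prop :=
  fun x => exists (r : R) (m : M) (k : nat), N (r ^+ k *: m) /\ x = r *: m.

Definition radical_formula (N : M -> Prop) : Prop :=
  forall x, gen_sub (E_M N) x <-> (forall P, prime_sub P -> subset_M N P -> P x).

Definition complete_radical_formula (N : M -> Prop) : Prop :=
  forall x, gen_sub (E_M N) x <-> (forall P, cprime_sub P -> subset_M N P -> P x).

Definition sn_pair (a : R) (m : M) : Prop :=
  forall s : nat -> R, s 0%N = a ->
    (forall n, exists r, s n.+1 = s n * r * s n) ->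
    exists k, forall r, (s k * r) *: m = 0.

Definition Ns : M -> Prop :=
  fun x => exists (n : nat) (a : 'I_n -> R) (m : 'I_n -> M),
    x = \sum_(i < n) a i *: m i /\ forall i, sn_pair (a i) (m i).

End ModuleDefs.

Definition projective (R : pzRingType) (M : lmodType R) : Prop :=
  forall (N N' : lmodType R) (g : N -> N') (f : M -> N'),
    rlinear g -> rlinear f -> (forall y, exists x, g x = y) ->
    exists h : M -> N, rlinear h /\ forall x, g (h x) = f x.

(* Main.v *)
Require Import Defs.
From mathcomp Require Import all_boot all_algebra.
From HB Require Import structures.
From mathcomp Require Import finmap.
From mathcomp.multinomials Require Import monalg.
From mathcomp.classical Require Import boolp classical_sets.
From Stdlib Require Import Classical.
Set Implicit Arguments. Unset Strict Implicit. Unset Printing Implicit Defensive.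
Import GRing.Theory.
Local Open Scope ring_scope.

Section FreeMod.
Variables (R : pzRingType) (K : choiceType).
Definition FM := malg K R.
HB.instance Definition _ := GRing.Zmodule.on FM.
Definition fgs (c : R) (g : FM) : FM := \sum_(k <- msupp g) << c * g@_k *g k >>.
Lemma fgsE c g k : (fgs c g)@_k = c * g@_k.
Proof.
rewrite /fgs [in RHS](monalgE g) !raddf_sum mulr_sumr.
by apply/eq_bigr=> /= i _; rewrite !mcoeffU mulrnAr.
Qed.
Lemma fgsA c1 c2 g : fgs c1 (fgs c2 g) = fgs (c1 * c2) g.
Proof. by apply/malgP=> x; rewrite !fgsE mulrA. Qed.
Lemma fgs1 g : fgs 1 g = g.
Proof. by apply/malgP=> k; rewrite !fgsE mul1r. Qed.
Lemma fgsDr c g1 g2 : fgs c (g1 + g2) = fgs c g1 + fgs c g2.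
Proof. by apply/malgP=> k; rewrite !(mcoeffD, fgsE) mulrDr. Qed.
Lemma fgsDl g c1 c2: fgs (c1 + c2) g = fgs c1 g + fgs c2 g.
Proof. by apply/malgP=> x; rewrite !(mcoeffD, fgsE) mulrDl. Qed.
HB.instance Definition _ := GRing.Zmodule_isLmodule.Build R FM fgsA fgs1 fgsDr fgsDl.
Lemma FM_coefZ c (g : FM) k : (c *: g)@_k = c * g@_k.
Proof. exact: fgsE. Qed.
Lemma FM_msuppZ c (g : FM) : (msupp (c *: g) `<=` msupp g)%fset.
Proof.
apply/fsubsetP=> k; rewrite -!mcoeff_neq0 FM_coefZ.
by apply/contraTneq=> ->; rewrite mulr0 negbK.
Qed.
End FreeMod.

Section Gsum.
Variables (R : pzRingType) (M : lmodType R).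
Definition gsum (f : FM R M) : M := \sum_(k <- msupp f) f@_k *: k.

Lemma gsumEw (f : FM R M) (d : {fset M}) : (msupp f `<=` d)%fset ->
  gsum f = \sum_(k <- d) f@_k *: k.
Proof.
move=> sub; rewrite /gsum; apply: big_fset_incl => // k _ kn.
by rewrite mcoeff_outdom // scale0r.
Qed.

Lemma gsum_lin : rlinear gsum.
Proof.
move=> a x y.
set d := (msupp x `|` msupp y)%fset.
have sx : (msupp x `<=` d)%fset by apply: fsubsetUl.
have sy : (msupp y `<=` d)%fset by apply: fsubsetUr.
have sxy : (msupp (a *: x + y) `<=` d)%fset.
  apply: fsubset_trans (msuppD_le _ _) _; apply: fsetUSS => //.
  exact: FM_msuppZ.
rewrite (gsumEw sx) (gsumEw sy) (gsumEw sxy) scaler_sumr -big_split /=.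
apply: eq_bigr => k _; by rewrite mcoeffD FM_coefZ scalerDl scalerA.
Qed.

Lemma gsum_surj : forall y : M, exists x, gsum x = y.
Proof.
move=> y; exists (<< 1 *g y >> : FM R M).
rewrite (gsumEw (msuppU_le)) big_seq_fset1 mcoeffUU scale1r //.
Qed.
End Gsum.

Section PrimeAvoid.
Variables (R : pzRingType) (sq : nat -> R).
Hypothesis sqS : forall n, exists r, sq n.+1 = sq n * r * sq n.
Hypothesis sq0 : forall n, sq n <> 0.

Definition rclosed (X : R -> Prop) :=
  [/\ (forall x y, X x -> X y -> X (x + y)), (forall r a, X a -> X (r * a))
    & (forall r a, X a -> X (a * r))].

Lemma sq_mono X : rclosed X -> forall i n, (i <= n)%N -> X (sq i) -> X (sq n).
Proof.
move=> [_ _ Xr] i n le Xi; rewrite -(subnK le).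
elim: (n - i)%N => [|k IH] //=.
rewrite addSn; have [r ->] := sqS (k + i).
by apply: (Xr); apply: (Xr); exact: IH.
Qed.

Definition rgen (X : R -> Prop) (a : R) : R -> Prop :=
  fun x => forall Y, rclosed Y -> (forall y, X y -> Y y) -> Y a -> Y x.

Lemma rgen_closed X a : rclosed (rgen X a).
Proof.
split.
- move=> x y Hx Hy Y HY XY Ya; case: (HY) => Yadd _ _; exact: Yadd (Hx Y HY XY Ya) (Hy Y HY XY Ya).
- move=> r x Hx Y HY XY Ya; case: (HY) => _ Yl _; exact: Yl (Hx Y HY XY Ya).
- move=> r x Hx Y HY XY Ya; case: (HY) => _ _ Yr; exact: Yr (Hx Y HY XY Ya).
Qed.

Lemma prime_avoid : exists p : R -> Prop,
  [/\ rclosed p, p 0, (forall n, ~ p (sq n))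
    & (forall a b, (forall r, p (a * r * b)) -> p a \/ p b)].
Proof.
pose P := fun X : set R => rclosed X /\ forall n, ~ X (sq n).
have [A [[Acl Aav] Amax]] : exists A, P A /\ forall B, proper A B -> ~ P B.
  apply: Zorn_bigcup => F FP Ftot; split.
  - split.
    + move=> x y [X FX Xx] [Y FY Yy].
      case: (Ftot X Y FX FY) => [XY|YX].
      * exists Y => //; case: (FP Y FY) => [[Yadd _ _] _]; apply: Yadd => //; exact: XY.
      * exists X => //; case: (FP X FX) => [[Xadd _ _] _]; apply: Xadd => //; exact: YX.
    + move=> r x [X FX Xx]; exists X => //; case: (FP X FX) => [[_ Xl _] _]; exact: Xl.
    + move=> r x [X FX Xx]; exists X => //; case: (FP X FX) => [[_ _ Xr] _]; exact: Xr.
  - move=> n [X FX Xs]; case: (FP X FX) => _ H; exact: H n Xs.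
case: (Acl) => Aadd Al Ar.
have A0 : A 0.
  apply: NNPP => nA0; apply: (Amax (fun x => x = 0)).
    split.
    + move=> x Ax; exfalso; apply: nA0; rewrite -(mul0r x); exact: Al.
    + move=> H; apply: nA0; exact: H.
  split.
  + split; [by move=> x y -> ->; rewrite addr0 | by move=> r a ->; rewrite mulr0
           | by move=> r a ->; rewrite mul0r].
  + move=> n; exact: sq0.
exists A; split => // a b Hab.
case: (classic (A a)) => Aa; first by left.
case: (classic (A b)) => Ab; first by right.
exfalso.
have exs : forall c, ~ A c -> exists i, rgen A c (sq i).
  move=> c nAc; apply: NNPP => H; apply: (Amax (rgen A c)).
    split; first by move=> y Ay Y _ AY _; exact: AY.
    move=> sub; apply: nAc; apply: sub => Y _ _; done.
  split; first exact: rgen_closed.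
  move=> n Hn; apply: H; by exists n.
have [i Hi] := exs a Aa.
have [j Hj] := exs b Ab.
have step1 : forall y, rgen A b y -> forall r, A (a * r * y).
  move=> y Hy; apply: (Hy (fun y => forall r, A (a * r * y))).
  - split.
    + move=> y1 y2 H1 H2 r; rewrite mulrDr; exact: Aadd.
    + move=> t y1 H1 r; have := H1 (r * t); by rewrite !mulrA.
    + move=> t y1 H1 r; rewrite mulrA; exact: Ar.
  - move=> y1 Ay1 r; exact: Al.
  - exact: Hab.
have step2 : forall x y, rgen A a x -> rgen A b y -> forall r, A (x * r * y).
  move=> x y Hx Hy; apply: (Hx (fun x => forall r, A (x * r * y))).
  - split.
    + move=> x1 x2 H1 H2 r; rewrite !mulrDl; exact: Aadd.
    + move=> t x1 H1 r; rewrite -!mulrA; have := H1 r; rewrite -mulrA; exact: Al.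
    + move=> t x1 H1 r; have := H1 (t * r); by rewrite !mulrA.
  - move=> x1 Ax1 r; rewrite -mulrA; exact: Ar.
  - exact: step1.
pose n := maxn i j.
have Hn1 : rgen A a (sq n) by apply: (sq_mono (rgen_closed A a) (leq_maxl i j)).
have Hn2 : rgen A b (sq n) by apply: (sq_mono (rgen_closed A b) (leq_maxr i j)).
have [r er] := sqS n.
apply: (Aav n.+1); rewrite er; exact: step2.
Qed.
End PrimeAvoid.

Section Main.
Variables (R : pzRingType) (M : lmodType R).

Lemma gen_sub_sub (S P : M -> Prop) : is_submodule P -> subset_M S P ->
  subset_M (gen_sub S) P.
Proof. by move=> HP HS x Hx; apply: Hx. Qed.

Lemma gen_sub_in (S : M -> Prop) x : S x -> gen_sub S x.
Proof. by move=> Sx P _ HS; apply: HS. Qed.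

Lemma gen_sub_is_sub (S : M -> Prop) : is_submodule (gen_sub S).
Proof.
split.
- by move=> P [P0 _ _] _.
- move=> x y Hx Hy P HP HS; case: (HP) => _ Padd _; exact: Padd (Hx P HP HS) (Hy P HP HS).
- move=> a x Hx P HP HS; case: (HP) => _ _ Ps; exact: Ps (Hx P HP HS).
Qed.

Let G := gen_sub (E_M (fun y : M => y = 0)).

Lemma Ns_G (x : M) : Ns x -> G x.
Proof.
move=> [n [a [m [-> sn]]]].
have [G0 Gadd _] := gen_sub_is_sub (E_M (fun y : M => y = 0)).
apply: (big_ind G) => // i _.
apply: gen_sub_in.
have [K fK] := sn i (fun n => iter n (fun b => b * b) (a i)) erefl
  (fun n => ex_intro _ 1 (esym (congr1 (fun z => z * _) (mulr1 _)))).
have [j ej] : exists j, iter K (fun b => b * b) (a i) = a i ^+ j.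
  elim: K {fK} => [|K [j ej]]; first by exists 1%N; rewrite expr1.
  by exists (j + j)%N; rewrite /= ej exprD.
exists (a i), (m i), j; split => //.
by rewrite -ej; have := fK 1; rewrite mulr1.
Qed.

Lemma G_Bco (x : M) : G x -> beta_co x.
Proof.
apply: gen_sub_sub.
- split.
  + by move=> P [[P0 _ _] _ _].
  + move=> y z Hy Hz P cP; have := cP; case=> [[_ Padd _] _ _]; exact: Padd (Hy P cP) (Hz P cP).
  + move=> a y Hy P cP; have := cP; case=> [[_ _ Ps] _ _]; exact: Ps (Hy P cP).
- move=> z [r [m [k [e ->]]]] P cP.
  case: cP => [[P0 _ Ps] _ Pc].
  have : P (r ^+ k *: m) by rewrite e.
  move: e => _; elim: k => [|k IH] H.
    by rewrite expr0 scale1r in H; exact: Ps.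
  rewrite exprS -scalerA in H.
  by case: (Pc _ _ H) => [/IH|]; [| apply].
Qed.

Lemma B_Ns : projective M -> forall x : M, beta x -> Ns x.
Proof.
move=> proj x Bx.
have [h [hlin ghx]] := proj (FM R M) M (@gsum R M) id (@gsum_lin R M)
  (fun a x y => erefl) (@gsum_surj R M).
have h0 : h 0 = 0.
  have e := hlin 1 0 0; rewrite !scale1r addr0 in e.
  by apply: (addrI (h 0)); rewrite addr0 -e.
have hD y z : h (y + z) = h y + h z by have := hlin 1 y z; rewrite !scale1r.
have hZ a y : h (a *: y) = a *: h y by have := hlin a y 0; rewrite !addr0 h0 addr0.
suff snk : forall k, sn_pair ((h x)@_k) k.
  exists (size (msupp (h x))), (fun i => (h x)@_(nth x (msupp (h x)) i)),
    (fun i => nth x (msupp (h x)) i); split; last by move=> i; apply: snk.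
  by rewrite -{1}(ghx x) /gsum (big_nth x) big_mkord.
move=> k; apply: NNPP => nsn.
have [s [s0 sS sK]] : exists s : nat -> R, [/\ s 0%N = (h x)@_k,
    (forall n, exists r, s n.+1 = s n * r * s n)
  & forall K, ~ forall r, (s K * r) *: k = 0].
  apply: NNPP => H; apply: nsn => s s0 sS; apply: NNPP => nK; apply: H.
  exists s; split => // K fK; apply: nK; exists K; exact: fK.
have sq0 : forall n, s n <> 0.
  by move=> n e; apply: (sK n) => r; rewrite e mul0r scale0r.
have [p [[padd pl pr] p0 pav pprime]] := prime_avoid sS sq0.
pose P := fun m : M => forall k', p ((h m)@_k').
have Psub : is_submodule P.
  split.
  - by move=> k'; rewrite h0 mcoeff0.
  - by move=> y z Hy Hz k'; rewrite hD mcoeffD; apply: padd.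
  - by move=> a y Hy k'; rewrite hZ FM_coefZ; apply: pl.
have nPx : ~ P x by move=> Px; apply: (pav 0%N); rewrite s0; exact: Px.
have pP : prime_sub P.
  split => //.
  - move=> sub; apply: nPx; apply: sub; apply: gen_sub_in.
    by exists 1, x; split => //; rewrite scale1r.
  - move=> A K [A0 Aadd Al Ar] Ksub sub.
    case: (classic (subset_M K P)) => [|nKP]; [by left | right].
    have [y [Ky nPy]] : exists y, K y /\ ~ P y.
      apply: NNPP => H; apply: nKP => y Ky; apply: NNPP => nPy; apply: H; by exists y.
    have [k' nb] : exists k', ~ p ((h y)@_k').
      apply: NNPP => H; apply: nPy => k'; apply: NNPP => nb; apply: H; by exists k'.
    apply: gen_sub_sub => // z [a' [m [Aa _ ->]]].
    have pa : p a'.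
      case: (pprime a' ((h y)@_k')) => // r.
      have : P ((a' * r) *: y).
        apply: sub; apply: gen_sub_in; exists (a' * r), y; split => //; exact: Ar.
      by move=> /(_ k'); rewrite hZ FM_coefZ.
    by move=> k''; rewrite hZ FM_coefZ; apply: pr.
apply: nPx; exact: Bx P pP.
Qed.

End Main.

Theorem theorem4p10 (R : pzRingType) (M : lmodType R) :
  projective M -> two_primal M ->
  [/\ (forall x : M, Ns x <-> gen_sub (E_M (fun y : M => y = 0)) x),
      (forall x : M, gen_sub (E_M (fun y : M => y = 0)) x <-> beta_co x),
      (forall x : M, beta_co x <-> beta x),
      complete_radical_formula (fun y : M => y = 0) &
      radical_formula (fun y : M => y = 0)].
Proof.
move=> proj tp.
have NG := @Ns_G R M.
have GB := @G_Bco R M.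
have BB : forall x : M, beta_co x -> beta x by move=> x; apply: (tp x).2.
have BN := @B_Ns R M proj.
split.
- by move=> x; split; [exact: NG | move=> H; exact: BN _ (BB _ (GB _ H))].
- by move=> x; split; [exact: GB | move=> H; exact: NG _ (BN _ (BB _ H))].
- by move=> x; split; [exact: BB | exact: (tp x).1].
- move=> x; split.
  + by move=> H P cP _; exact: GB _ H P cP.
  + move=> H; apply: NG; apply: BN; apply: BB => P cP; apply: (H _ cP) => y ->.
    by case: cP => [[]].
- move=> x; split.
  + by move=> H P pP _; exact: BB _ (GB _ H) P pP.
  + move=> H; apply: NG; apply: BN => P pP; apply: (H _ pP) => y ->.
    by case: pP => [[]].
Qed.
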